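(* Let $J\ge5$ be an integer and $L\in\{2,\dots,J-1\}$. Let $\mathbb{A}$ be the $J\times J$ symmetric tridiagonal matrix with $\mathbb{A}_{11}=\mathbb{A}_{JJ}=1$, $\mathbb{A}_{jj}=2$ for $1<j<J$, $\mathbb{A}_{j,j+1}=\mathbb{A}_{j+1,j}=-1$ for $1\le j<J$, and all other entries zero. Let $D=\mathrm{diag}(d_1,\dots,d_J)$ with $d_L=-1$ and $d_j=2$ for $j\ne L$, and let $\mathbb{B}:=\mathbb{A}D$ (so $\mathbb{B}$ coincides with $2\mathbb{A}$ except in rows $L-1,L,L+1$, whose nonzero entries in columns $L-2,\dots,L+2$ are $2(-1,2,\tfrac12)$ in row $L-1$ (columns $L-2,L-1,L$), $2(-1,-1,-1)$ in row $L$ (columns $L-1,L,L+1$), and $2(\tfrac12,2,-1)$ in row $L+1$ (columns $L,L+1,L+2$)). Then $\mathbb{B}$ is diagonalizable over $\mathbb{R}$ with $J$ distinct eigenvalues, which can be ordered as $$-1<\mu_{-1}<\mu_0=0<\mu_1<\dots<\mu_{J-2}<8 .$$ In particular, $\mathbb{B}$ has exactly one negative eigenvalue. *)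

(* Defs.v *)
From mathcomp Require Import all_boot all_order all_algebra.
From mathcomp Require Export reals.
Set Implicit Arguments. Unset Strict Implicit. Unset Printing Implicit Defensive.
Import Order.TTheory GRing.Theory Num.Theory.
Local Open Scope ring_scope.

(* Indices are 0-based: the paper's index j (1 <= j <= J) corresponds to the
   ordinal i : 'I_J with i.+1 = j. *)

Definition matA (R : realType) (J : nat) : 'M[R]_J :=
  \matrix_(i < J, j < J)
    if i == j then (if (i == 0%N :> nat) || (i == J.-1 :> nat) then 1 else 2)
    else if (i.+1 == j :> nat) || (j.+1 == i :> nat) then -1 else 0.

Definition matD (R : realType) (J L : nat) : 'M[R]_J :=
  diag_mx (\row_(j < J) if j.+1 == L then -1 else 2).

Definition matB (R : realType) (J L : nat) : 'M[R]_J := matA R J *m matD R J L.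

(* Main.v *)
Require Import Defs.
From mathcomp Require Import all_boot all_order all_algebra.
From mathcomp Require Import reals.
From mathcomp Require Import ring lra zify.
Import Order.TTheory GRing.Theory Num.Theory.
Local Open Scope ring_scope.
Set Implicit Arguments. Unset Strict Implicit. Unset Printing Implicit Defensive.

Definition ee (R : realType) (L i : nat) : R := if i.+1 == L then -1 else 2.

Fixpoint PP (R : realType) (L k : nat) : {poly R} :=
  match k with
  | 0 => 1
  | 1 => 'X - (ee R L 0 + ee R L 1)%:P
  | (k'.+1 as k1).+1 => ('X - (ee R L k1 + ee R L k1.+1)%:P) * PP R L k1
                        - (ee R L k1 ^+ 2)%:P * PP R L k'
  end.

Lemma PP_SS (R : realType) L k x :
  (PP R L k.+2).[x] = (x - (ee R L k.+1 + ee R L k.+2)) * (PP R L k.+1).[x]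
                      - ee R L k.+1 ^+ 2 * (PP R L k).[x].
Proof. by rewrite /= !hornerE. Qed.

Lemma PP_1 (R : realType) L x : (PP R L 1).[x] = x - (ee R L 0 + ee R L 1).
Proof. by rewrite /= !hornerE. Qed.

Lemma ee_cases (R : realType) L i : ee R L i = -1 \/ ee R L i = 2.
Proof. rewrite /ee; case: ifP; by [left|right]. Qed.

Lemma PP_monic (R : realType) L k :
  (PP R L k \is monic /\ size (PP R L k) = k.+1) /\
  (PP R L k.+1 \is monic /\ size (PP R L k.+1) = k.+2).
Proof.
elim: k => [|k [[m0 s0] [m1 s1]]].
  split; first by rewrite monic1 size_poly1.
  by rewrite /= monicXsubC size_XsubC.
split=> //.
have hm : ('X - (ee R L k.+1 + ee R L k.+2)%:P) * PP R L k.+1 \is monic.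
  by rewrite monicMl ?monicXsubC.
have hs : size (('X - (ee R L k.+1 + ee R L k.+2)%:P) * PP R L k.+1) = k.+3.
  by rewrite size_Mmonic ?s1 ?size_XsubC // ?monic_neq0 ?monicXsubC.
have hq : (size (- ((ee R L k.+1 ^+ 2)%:P * PP R L k)) < k.+3)%N.
  rewrite size_polyN mul_polyC (leq_ltn_trans (size_scale_leq _ _)) //.
  by rewrite s0.
rewrite [PP R L k.+2]/=.
split; first by rewrite monicE lead_coefDl ?hs // -monicE.
by rewrite size_polyDl hs.
Qed.


Lemma bound8 (R : realType) L k :
  0 < (PP R L k).[8] /\ 2 * (PP R L k).[8] <= (PP R L k.+1).[8].
Proof.
elim: k => [|k [h0 h1]].
  rewrite PP_1 /= hornerE.
  by case: (ee_cases R L 0) => ->; case: (ee_cases R L 1) => ->; split; lra.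
split; first lra.
rewrite PP_SS.
by case: (ee_cases R L k.+1) => ->; case: (ee_cases R L k.+2) => ->; nra.
Qed.

Definition QQ (R : realType) L k : R := (-1) ^+ k * (PP R L k).[-1].

Lemma QQ_SS (R : realType) L k :
  QQ R L k.+2 = (1 + ee R L k.+1 + ee R L k.+2) * QQ R L k.+1
                - ee R L k.+1 ^+ 2 * QQ R L k.
Proof. rewrite /QQ PP_SS !exprS; ring. Qed.

Lemma ee_m1 (R : realType) L i : ee R L i = -1 -> i.+1 = L.
Proof. by rewrite /ee; case: eqP => // _ H; exfalso; lra. Qed.

Lemma ee_2 (R : realType) L i : i.+1 != L -> ee R L i = 2.
Proof. by rewrite /ee => /negbTE ->. Qed.

Lemma boundm1 (R : realType) L k : (2 <= L)%N ->
  0 < QQ R L k /\ QQ R L k <= QQ R L k.+1 /\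
  ((k + 3 <= L)%N -> 4 * QQ R L k <= QQ R L k.+1).
Proof.
move=> hL; elim: k => [|k [h0 [h1 h2]]].
  rewrite /QQ PP_1 /= !hornerE expr1.
  rewrite (@ee_2 R L 0); last by apply/eqP => E; rewrite -E in hL.
  split; first lra.
  case: (ee_cases R L 1) => [e1|->]; last by split; lra.
  have := ee_m1 e1; rewrite e1 => E.
  split; first lra.
  by move=> H; exfalso; move: H; rewrite -E.
split; first lra.
rewrite QQ_SS.
case: (ee_cases R L k.+1) => [e1|->];
case: (ee_cases R L k.+2) => [e2|->].
- by exfalso; have := ee_m1 e1; have := ee_m1 e2; lia.
- have E := ee_m1 e1; rewrite e1; split; first nra.
  by rewrite -E => H; exfalso; lia.
- have E := ee_m1 e2; rewrite e2.
  split; first by have := h2 ltac:(lia); nra.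
  by rewrite -E => H; exfalso; lia.
- split; first nra.
  move=> H; have := h2 ltac:(lia); nra.
Qed.


Definition GG (R : realType) L k : R := (-1) ^+ k * (PP R L k).[0].
Definition EE (R : realType) L k : R :=
  if (k.+1 < L)%N then 2 ^+ k * (k.+1)%:R else 2 ^+ k.-1 * (2 - k%:R).

Lemma GG_SS (R : realType) L k :
  GG R L k.+2 = (ee R L k.+1 + ee R L k.+2) * GG R L k.+1
                - ee R L k.+1 ^+ 2 * GG R L k.
Proof. rewrite /GG PP_SS !exprS; ring. Qed.

Lemma natS (R : realType) n : (n.+1)%:R = n%:R + 1 :> R.
Proof. by rewrite -addn1 natrD. Qed.

Lemma GG_EE (R : realType) L k : (2 <= L)%N ->
  GG R L k = EE R L k /\ GG R L k.+1 = EE R L k.+1.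
Proof.
move=> hL; elim: k => [|k [h0 h1]].
  rewrite /GG /EE PP_1 /= !hornerE expr1 expr0.
  rewrite (@ee_2 R L 0); last by apply/eqP => E; rewrite -E in hL.
  rewrite ifT //.
  case: (ee_cases R L 1) => [e1|e1].
    have E := ee_m1 e1; rewrite e1 -E /=; split; ring.
  case: ltnP => H.
    rewrite e1; split; ring.
  exfalso; have : L = 2%N by lia.
  by move=> E; move: e1; rewrite /ee E /=; lra.
split=> //.
rewrite GG_SS h0 h1 /EE.
case: (ee_cases R L k.+1) => [e1|e1];
case: (ee_cases R L k.+2) => [e2|e2].
- by exfalso; have := ee_m1 e1; have := ee_m1 e2; lia.
- have E := ee_m1 e1; rewrite e1 e2 -E.
  repeat (case: ifP => ?; try (exfalso; lia)).
  rewrite /= !natS !exprS; ring.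
- have E := ee_m1 e2; rewrite e1 e2 -E.
  repeat (case: ifP => ?; try (exfalso; lia)).
  rewrite /= !natS !exprS; ring.
- have Hk : (k.+2 != L) by apply/eqP => E; move: e1; rewrite /ee E eqxx; lra.
  have Hk2 : (k.+3 != L) by apply/eqP => E; move: e2; rewrite /ee E eqxx; lra.
  rewrite e1 e2.
  repeat (case: ifP => ?; try (exfalso; lia)).
  + rewrite /= !natS !exprS; ring.
  + have -> : k = k.-1.+1 by lia.
    rewrite /= !natS !exprS; ring.
Qed.


Lemma mono_gen (R : realType) (r : nat -> R) k :
  (forall i, (i.+1 < k)%N -> r i < r i.+1) ->
  forall i j, (i < j)%N -> (j < k)%N -> r i < r j.
Proof.
move=> h i j; elim: j => // j IH; rewrite ltnS leq_eqVlt => /orP[/eqP->|hij] hj.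
  exact: h.
by apply: lt_trans (IH hij (ltnW hj)) (h _ hj).
Qed.

Lemma sgn_prod (R : realType) (r : nat -> R) x k i : (i <= k)%N ->
  (forall j, (j < i)%N -> r j < x) -> (forall j, (i <= j)%N -> (j < k)%N -> x < r j) ->
  0 < (-1) ^+ (k - i) * \prod_(j < k) (x - r j).
Proof.
move=> hik hlo hhi; elim: k hik hhi => [|k IH] hik hhi.
  by rewrite (leqn0 _) in hik; rewrite big_ord0 mulr1 expr0.
rewrite leq_eqVlt in hik; case/orP: hik => [/eqP Ei|hik].
  rewrite Ei subnn expr0 mul1r; apply: prodr_gt0 => j _.
  by rewrite subr_gt0 hlo // Ei.
rewrite big_ord_recr /= subSn // exprS.
have := IH hik (fun j a b => hhi j a (ltnW b)).
have := hhi k hik (ltnSn k); rewrite -subr_lt0.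
set A := \prod_(j < k) _; set B := (-1) ^+ (k - i); nra.
Qed.

Lemma ivt_strict (R : realType) (p : {poly R}) a b : a < b -> p.[a] * p.[b] < 0 ->
  exists x, (a < x < b) && root p x.
Proof.
move=> hab hp.
have key : forall q : {poly R}, q.[a] < 0 -> 0 < q.[b] -> exists x, (a < x < b) && root q x.
  move=> q qa qb; have [x /andP[h1 h2] hx] := poly_ivt (ltW hab) (introT andP (conj (ltW qa) (ltW qb))).
  exists x; rewrite hx andbT; move/eqP: hx => hx.
  have xa : x != a by apply/eqP => E; move: qa; rewrite -E hx ltxx.
  have xb : x != b by apply/eqP => E; move: qb; rewrite -E hx ltxx.
  by rewrite lt_neqAle eq_sym xa h1 /= lt_neqAle xb h2.
have [ha|ha] := ltP p.[a] 0.
  by apply: key => //; nra.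
have pa : 0 < p.[a].
  by rewrite lt_neqAle ha andbT; apply/eqP => E; move: hp; rewrite -E mul0r ltxx.
have pb : p.[b] < 0 by rewrite -(pmulr_rlt0 _ pa).
have [x hx] := key (- p) ltac:(rewrite hornerN oppr_lt0 //) ltac:(rewrite hornerN oppr_gt0 //).
by exists x; rewrite rootN in hx.
Qed.

Lemma factor_lemma (R : realType) (p : {poly R}) (s : nat -> R) k :
  p \is monic -> size p = k.+1 ->
  (forall i, (i.+1 < k)%N -> s i < s i.+1) ->
  (forall i, (i < k)%N -> root p (s i)) ->
  p = \prod_(i < k) ('X - (s i)%:P).
Proof.
move=> pm ps hs hr.
have := @all_roots_prod_XsubC _ p (mkseq s k).
rewrite size_mkseq ps uniq_rootsE => /(_ erefl).
have hall : all (root p) (mkseq s k).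
  by apply/allP => x /mapP[i]; rewrite mem_iota add0n => /andP[_ hi] ->; apply: hr.
have hu : uniq (mkseq s k).
  apply/mkseq_uniqP => i j; rewrite !inE => hi hj hij.
  case: (ltngtP i j) => // h; exfalso.
    by have := mono_gen hs h hj; rewrite hij ltxx.
  by have := mono_gen hs h hi; rewrite hij ltxx.
move=> /(_ hall hu) ->; rewrite (monicP pm) scale1r.
rewrite /mkseq big_map.
have -> : iota 0 k = index_iota 0 k by rewrite /index_iota subn0.
by rewrite big_mkord.
Qed.

Lemma sgn_sq (R : realType) n : ((-1) ^+ n) ^+ 2 = 1 :> R.
Proof. by rewrite -exprM mulnC exprM expr2 mulrNN mulr1 expr1n. Qed.

Lemma ee_sq_pos (R : realType) L i : 0 < ee R L i ^+ 2.
Proof. by case: (ee_cases R L i) => ->; rewrite expr2; lra. Qed.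

Lemma sturm (R : realType) L k : (2 <= L)%N -> (1 <= k)%N -> exists r : nat -> R,
  [/\ forall i, (i.+1 < k)%N -> r i < r i.+1,
      forall i, (i < k)%N -> -1 < r i < 8,
      PP R L k = \prod_(i < k) ('X - (r i)%:P) &
      forall i, (i < k)%N -> 0 < (-1) ^+ (k.-1 - i) * (PP R L k.-1).[r i]].
Proof.
move=> hL; elim: k => // k IH _.
case: k IH => [_|k IH].
  have e0 : ee R L 0 = 2 by apply: ee_2; apply/eqP => E; rewrite -E in hL.
  exists (fun _ => ee R L 0 + ee R L 1); split.
  - by [].
  - move=> i _; rewrite e0; case: (ee_cases R L 1) => ->; apply/andP; split; lra.
  - by rewrite big_ord1.
  - by move=> i _; rewrite /= expr0 mul1r hornerC.
have [r [rmono rb rfac rsg]] := IH erefl.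
have rmono' := mono_gen rmono.
have hroot : forall j, (j < k.+1)%N -> (PP R L k.+1).[r j] = 0.
  move=> j hj; rewrite rfac horner_prod (bigD1 (Ordinal hj)) //=.
  by rewrite hornerXsubC subrr mul0r.
have hPr : forall j, (j < k.+1)%N -> 0 < (-1) ^+ (k.+1 - j) * (PP R L k.+2).[r j].
  move=> j hj; rewrite PP_SS hroot // subSn // exprS.
  have := rsg j hj; have := ee_sq_pos R L k.+1; rewrite /= => h1 h2; nra.
pose a i := if i == 0%N then -1 else r i.-1.
pose b i := if i == k.+1 then 8 else r i.
have hsa : forall i, (i < k.+2)%N -> 0 < (-1) ^+ (k.+2 - i) * (PP R L k.+2).[a i].
  move=> [|i] hi; rewrite /a /=.
    by have [] := boundm1 R k.+2 hL.
  by rewrite subSS; apply: hPr.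
have hsb : forall i, (i < k.+2)%N -> 0 < (-1) ^+ (k.+1 - i) * (PP R L k.+2).[b i].
  move=> i hi; rewrite /b; case: eqP => [->|/eqP hik].
    by rewrite subnn expr0 mul1r; have [] := bound8 R L k.+2.
  by apply: hPr; rewrite ltn_neqAle hik -ltnS.
have hab : forall i, (i < k.+2)%N -> a i < b i.
  move=> i hi; rewrite /a /b.
  case: eqP => [->|/eqP hik]; case: eqP => [Ei|/eqP hi0].
  - by [].
  - by have := rb 0%N ltac:(lia); case/andP.
  - by have := rb i.-1 ltac:(lia); case/andP.
  - by apply: rmono'; lia.
have hex : forall i, exists x, (i < k.+2)%N ==> ((a i < x < b i) && root (PP R L k.+2) x).
  move=> i; case: (ltnP i k.+2) => hi; last by exists 0.
  have [x hx] : exists x, (a i < x < b i) && root (PP R L k.+2) x.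
    apply: ivt_strict; first exact: hab.
    have := hsa i hi; have := hsb i hi; have -> : (k.+2 - i = (k.+1 - i).+1)%N by lia. rewrite exprS.
    have := sgn_sq R (k.+1 - i); nra.
  by exists x.
pose s i := xchoose (hex i).
have hs : forall i, (i < k.+2)%N -> [/\ a i < s i, s i < b i & root (PP R L k.+2) (s i)].
  move=> i hi; have := xchooseP (hex i); rewrite -/(s i).
  by move=> /implyP /(_ hi) /andP[/andP[-> ->] ->].
have smono : forall i, (i.+1 < k.+2)%N -> s i < s i.+1.
  move=> i hi; have [_ h1 _] := hs i (ltnW hi); have [h2 _ _] := hs i.+1 hi.
  move: h1 h2; rewrite /a /b /=; case: eqP => [E|_]; first by exfalso; lia.
  exact: lt_trans.
exists s; split => //.
- move=> i hi; have [h1 h2 _] := hs i hi; apply/andP; split.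
    move: h1; rewrite /a; case: eqP => // _ h1.
    by have := rb i.-1 ltac:(lia); case/andP => h3 _; apply: lt_trans h3 h1.
  move: h2; rewrite /b; case: eqP => // /eqP ne h2.
  by have := rb i ltac:(lia); case/andP => _ h3; apply: lt_trans h2 h3.
- have [[m s1] _] := PP_monic R L k.+2.
  by apply: factor_lemma => // i hi; have [] := hs i hi.
- move=> i hi; change (0 < (-1) ^+ (k.+1 - i) * (PP R L k.+1).[s i]); rewrite rfac horner_prod.
  under eq_bigr => j _ do rewrite hornerXsubC.
  have [h1 h2 _] := hs i hi.
  apply: (sgn_prod (r := r)); first by lia.
  + move=> j hj; move: h1; rewrite /a; case: eqP => [E|_]; first by exfalso; lia.
    move=> h1; apply: le_lt_trans h1.
    case: (ltnP j i.-1) => hji; first by apply/ltW/rmono'; lia.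
    by have -> : j = i.-1 by lia.
  + move=> j hj hjk; move: h2; rewrite /b; case: eqP => [E|_]; first by exfalso; lia.
    move=> h2; apply: lt_le_trans h2 _.
    case: (ltnP i j) => hij; first by apply/ltW/rmono'.
    by have -> : j = i by lia.
Qed.


Fixpoint useq (R : realType) L (a : R) k : R :=
  match k with
  | 0 => 0
  | 1 => 1
  | (k'.+1 as k1).+1 =>
      ((ee R L k' + ee R L k1 - a) * useq L a k1 - ee R L k' * useq L a k') / ee R L k1
  end.

Lemma ee_neq0 (R : realType) L i : ee R L i != 0.
Proof. by case: (ee_cases R L i) => ->; apply/eqP; lra. Qed.

Lemma u_SS (R : realType) L (a : R) k : useq L a k.+2 =
  ((ee R L k + ee R L k.+1 - a) * useq L a k.+1 - ee R L k * useq L a k) / ee R L k.+1.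
Proof. by []. Qed.

Lemma u_rec (R : realType) L (a : R) k :
  a * useq L a k.+1 = ee R L k * (useq L a k.+1 - useq L a k)
                      - ee R L k.+1 * (useq L a k.+2 - useq L a k.+1).
Proof.
rewrite u_SS; have := ee_neq0 R L k.+1; set e1 := ee R L k.+1 => h.
field; exact: h.
Qed.

Definition pe (R : realType) L k : R := \prod_(i < k) ee R L i.+1.

Lemma u_P (R : realType) L (a : R) k :
  useq L a k.+1 * pe R L k = (-1) ^+ k * (PP R L k).[a] /\
  useq L a k.+2 * pe R L k.+1 = (-1) ^+ k.+1 * (PP R L k.+1).[a].
Proof.
elim: k => [|k [h0 h1]].
  rewrite /pe big_ord0 big_ord1 PP_1 u_SS /= hornerC.
  split; first by rewrite expr0 !mul1r.
  have := ee_neq0 R L 1; set e1 := ee R L 1 => h.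
  rewrite expr1; field; exact: h.
split => //.
have -> : pe R L k.+2 = pe R L k * ee R L k.+1 * ee R L k.+2.
  by rewrite /pe !big_ord_recr.
have E1 : pe R L k.+1 = pe R L k * ee R L k.+1 by rewrite /pe big_ord_recr.
rewrite E1 in h1.
rewrite u_SS PP_SS.
have := ee_neq0 R L k.+2.
set u1 := useq L a k.+1 in h0 h1 *; set u2 := useq L a k.+2 in h1 *.
set P0 := (PP R L k).[a] in h0 *; set P1 := (PP R L k.+1).[a] in h1 *.
set e1 := ee R L k.+1 in h1 *; set e2 := ee R L k.+2; set p := pe R L k in h0 h1 * => h.
transitivity ((e1 + e2 - a) * (u2 * (p * e1)) - e1 ^+ 2 * (u1 * p)).
  field; exact: h.
rewrite h0 h1 !exprS; ring.
Qed.


Lemma sum_eq (R : realType) J (F : nat -> R) c :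
  \sum_(i < J) F i * (i == c :> nat)%:R = if (c < J)%N then F c else 0.
Proof.
case: ltnP => hc.
  rewrite (bigD1 (Ordinal hc)) //= eqxx mulr1 big1 ?addr0 // => i hi.
  have -> : (i == c :> nat) = false.
    by apply/negbTE; apply: contra hi => /eqP E; apply/eqP/val_inj.
  by rewrite mulr0.
rewrite big1 // => i _.
have -> : (i == c :> nat) = false by apply/negbTE/eqP => E; have := ltn_ord i; lia.
by rewrite mulr0.
Qed.

Lemma tR (R : realType) : ((true : nat)%:R = 1 :> R). Proof. by []. Qed.
Lemma fR (R : realType) : ((false : nat)%:R = 0 :> R). Proof. by []. Qed.

Lemma matA_entry (R : realType) J (i j : 'I_J) : (1 < J)%N ->
  matA R J i j = (i == j :> nat)%:R * ((0 < j)%N%:R + (j.+1 < J)%N%:R)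
                 - (i.+1 == j :> nat)%:R - (i == j.+1 :> nat)%:R.
Proof.
move=> hJ; rewrite /matA mxE.
have hi := ltn_ord i; have hj := ltn_ord j.
case: (eqVneq i j) => [->|nij].
  rewrite eqxx.
  have -> : (j.+1 == j :> nat) = false by apply/negbTE/eqP; lia.
  have -> : (j == j.+1 :> nat) = false by apply/negbTE/eqP; lia.
  case: (eqVneq (j : nat) 0%N) => [j0|/eqP j0].
    by rewrite j0 /= hJ !subr0 add0r mul1r.
  case: (eqVneq (j : nat) J.-1) => [jJ|jJ].
    have -> : (0 < j)%N = true by lia.
    have -> : (j.+1 < J)%N = false by lia.
    by rewrite ?tR ?fR /=; lra.
  have -> : (0 < j)%N = true by lia.
  have -> : (j.+1 < J)%N = true by lia.
  by rewrite ?tR ?fR /=; lra.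
have -> : (i == j :> nat) = false by apply/negbTE.
rewrite fR mul0r sub0r.
case: (eqVneq (i.+1 : nat) j) => [e1|e1];
case: (eqVneq (j.+1 : nat) i) => [e2|e2].
- by exfalso; lia.
- by rewrite ?tR ?fR /=; lra.
- by rewrite ?tR ?fR /=; lra.
- by rewrite ?tR ?fR /=; lra.
Qed.

Lemma mulA_row (R : realType) J (F : nat -> R) (j : 'I_J) : (1 < J)%N ->
  ((\row_(i < J) F i) *m matA R J) 0 j =
  (if (0 < j)%N then F j - F j.-1 else 0) + (if (j.+1 < J)%N then F j - F j.+1 else 0).
Proof.
move=> hJ; rewrite mxE.
under eq_bigr => i _ do rewrite mxE matA_entry // !mulrBr.
rewrite !sumrB.
set c := ((0 < j)%N%:R + (j.+1 < J)%N%:R : R).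
have h1 : \sum_(i < J) F i * ((i == j :> nat)%:R * c) = F j * c.
  rewrite (eq_bigr (fun i : 'I_J => F i * (i == j :> nat)%:R * c)).
    by rewrite -mulr_suml sum_eq ltn_ord.
  by move=> i _; rewrite mulrA.
have h2 : \sum_(i < J) F i * (i.+1 == j :> nat)%:R = if (0 < j)%N then F j.-1 else 0.
  case: (posnP j) => hj.
    by rewrite big1 // => i _; rewrite hj /= fR mulr0.
  rewrite (eq_bigr (fun i : 'I_J => F i * (i == j.-1 :> nat)%:R)).
    by rewrite sum_eq; have -> : (j.-1 < J)%N by have := ltn_ord j; lia.
  by move=> i _; have -> : (i.+1 == j :> nat) = (i == j.-1 :> nat) by apply/eqP/eqP; lia.
have h3 : \sum_(i < J) F i * (i == j.+1 :> nat)%:R = if (j.+1 < J)%N then F j.+1 else 0.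
  exact: sum_eq.
rewrite h1 h2 h3 /c.
by case: (0 < j)%N; case: (j.+1 < J)%N; rewrite ?tR ?fR; lra.
Qed.


Lemma matB_row (R : realType) J L (F : nat -> R) (j : 'I_J) : (1 < J)%N ->
  ((\row_(i < J) F i) *m matB R J L) 0 j =
  ((if (0 < j)%N then F j - F j.-1 else 0) + (if (j.+1 < J)%N then F j - F j.+1 else 0))
  * ee R L j.
Proof.
move=> hJ; rewrite /matB /matD mulmxA mul_mx_diag mxE mulA_row // mxE.
by [].
Qed.

Lemma row_neq0 (R : realType) J (F : nat -> R) (k : nat) : (k < J)%N -> F k != 0 ->
  (\row_(i < J) F i) != 0.
Proof.
move=> hk hF; apply/eqP => /matrixP /(_ 0 (Ordinal hk)); rewrite !mxE /=.
by move/eqP; rewrite (negbTE hF).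
Qed.

Lemma eig0 (R : realType) J L : (1 < J)%N -> eigenvalue (matB R J L) 0.
Proof.
move=> hJ; apply/eigenvalueP; exists (\row_(i < J) (1 : R)).
  apply/matrixP => i j; rewrite (ord1 i) (@matB_row R J L (fun _ => 1)) // !mxE mul0r.
  by case: ifP; case: ifP; rewrite ?subrr ?addr0 mul0r.
by apply: (@row_neq0 R J (fun _ => 1) 0%N); [lia | exact: oner_neq0].
Qed.

Lemma eig_u (R : realType) J L (a : R) : (1 < J)%N -> a != 0 -> useq L a J = 0 ->
  eigenvalue (matB R J L) a.
Proof.
move=> hJ ha huJ.
pose F k := ee R L k * (useq L a k.+1 - useq L a k) / a.
have hF : forall k, F k - F k.+1 = useq L a k.+1.
  move=> k; rewrite /F -mulrBl -u_rec mulrC mulKf //.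
apply/eigenvalueP; exists (\row_(i < J) F i).
  apply/matrixP => i j; rewrite (ord1 i) matB_row // !mxE.
  have hj := ltn_ord j.
  have E : (if (0 < j)%N then F j - F j.-1 else 0) + (if (j.+1 < J)%N then F j - F j.+1 else 0)
           = useq L a j.+1 - useq L a j.
    case: (posnP j) => h0.
      rewrite h0 /=; have -> : (1 < J)%N = true by [].
      by rewrite -h0 hF h0 /= subr0 add0r.
    have h := hF j.-1; rewrite prednK // in h.
    case: ltnP => h1.
      by have := hF j; lra.
    have E : j.+1 = J by lia.
    by rewrite E huJ; lra.
  rewrite E /F mulrC; field; exact: ha.
have h := hF 0%N; rewrite [useq L a 1]/= in h.
case: (eqVneq (F 0%N) 0) => h0.
  apply: (@row_neq0 R J F 1%N) => //.
  by apply/eqP => h1; move: h; rewrite h0 h1 subrr => /eqP; rewrite eq_sym oner_eq0.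
by apply: (@row_neq0 R J F 0%N) => //; lia.
Qed.


Lemma sbp (R : realType) (g v : nat -> R) n :
  \sum_(k < n) v k.+1 * (g k - g k.+1) + v n.+1 * g n - v 0%N * g 0%N =
  \sum_(k < n.+1) (v k.+1 - v k) * g k.
Proof.
elim: n => [|n IH]; first by rewrite big_ord0 big_ord1; ring.
rewrite big_ord_recr [in RHS]big_ord_recr /= -IH; ring.
Qed.

Lemma qf_id (R : realType) J L (a : R) (v : nat -> R) : (0 < J)%N ->
  v 0%N = 0 -> v J = 0 ->
  a * \sum_(k < J.-1) v k.+1 * useq L a k.+1 =
  \sum_(k < J) ee R L k * (useq L a k.+1 - useq L a k) * (v k.+1 - v k).
Proof.
move=> hJ v0 vJ.
have := sbp (fun k => ee R L k * (useq L a k.+1 - useq L a k)) v J.-1.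
rewrite prednK // vJ v0 !mul0r subr0 addr0 => H.
rewrite (eq_bigr (fun k : 'I_J => (v k.+1 - v k) * (ee R L k * (useq L a k.+1 - useq L a k)))); last by move=> k _; ring.
rewrite -H.
rewrite mulr_sumr; apply: eq_bigr => k _; rewrite mulrCA u_rec; ring.
Qed.

Lemma qf_nonneg (R : realType) J L (y : nat -> R) : (0 < L)%N -> y L.-1 = 0 ->
  forall k : 'I_J, 0 <= ee R L k * y k ^+ 2.
Proof.
move=> hL hy k; case: (eqVneq (k : nat) L.-1) => [->|hk].
  by rewrite hy expr0n mulr0.
rewrite ee_2; last by apply/eqP => E; move/eqP: hk; rewrite -E.
by apply: mulr_ge0 => //; apply: sqr_ge0.
Qed.

Lemma qf_contra (R : realType) J L (a a' : R) : (2 <= L)%N -> (L <= J.-1)%N ->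
  useq L a J = 0 -> useq L a' J = 0 -> a < a' -> a' <= 0 -> False.
Proof.
move=> hL hLJ huJ hu'J haa' ha'.
have hJ : (1 < J)%N by lia.
have hJ0 : (0 < J)%N by lia.
set u := useq L a; set u' := useq L a'.
have u0 : u 0%N = 0 by []. have u'0 : u' 0%N = 0 by [].
have u1 : u 1%N = 1 by []. have u'1 : u' 1%N = 1 by [].
set A := \sum_(k < J.-1) u k.+1 * u k.+1.
set B := \sum_(k < J.-1) u' k.+1 * u' k.+1.
set C := \sum_(k < J.-1) u' k.+1 * u k.+1.
set Fuu := \sum_(k < J) ee R L k * (u k.+1 - u k) * (u k.+1 - u k).
set Fvv := \sum_(k < J) ee R L k * (u' k.+1 - u' k) * (u' k.+1 - u' k).
set X := \sum_(k < J) ee R L k * (u k.+1 - u k) * (u' k.+1 - u' k).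
have hA : a * A = Fuu by apply: qf_id.
have hB : a' * B = Fvv by apply: qf_id.
have hX1 : a * C = X by apply: qf_id.
have hX2 : a' * C = X.
  have -> : C = \sum_(k < J.-1) u k.+1 * u' k.+1 by apply: eq_bigr => k _; rewrite mulrC.
  rewrite (@qf_id R J L a' u) // /X /u'; apply: eq_bigr => k _; ring.
have hC : C = 0.
  have : (a' - a) * C = 0 by rewrite mulrBl hX1 hX2 subrr.
  by move/eqP; rewrite mulf_eq0 subr_eq0 (gt_eqF haa') /= => /eqP.
have hX : X = 0 by rewrite -hX1 hC mulr0.
have A1 : 1 <= A.
  have hJ1 : (0 < J.-1)%N by lia.
  rewrite /A (bigD1 (Ordinal hJ1)) //= u1 mulr1 lerDl.
  by apply: sumr_ge0 => k _; rewrite -expr2; apply: sqr_ge0.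
have B0 : 0 <= B by apply: sumr_ge0 => k _; rewrite -expr2; apply: sqr_ge0.
have hLJ' : (L.-1 < J)%N by lia.
have hL0 : (0 < L)%N by lia.
pose al := u' L - u' L.-1; pose be := - (u L - u L.-1).
pose y k := al * (u k.+1 - u k) + be * (u' k.+1 - u' k).
have hy : y L.-1 = 0 by rewrite /y prednK ?(ltnW hL) // /al /be; ring.
have Fz : \sum_(k < J) ee R L k * y k ^+ 2 = al ^+ 2 * Fuu + 2 * al * be * X + be ^+ 2 * Fvv.
  rewrite /Fuu /Fvv /X !mulr_sumr -!big_split; apply: eq_bigr => k _; rewrite /y /=; ring.
rewrite hX -hA -hB mulr0 addr0 in Fz.
have Fz0 : 0 <= \sum_(k < J) ee R L k * y k ^+ 2.
  by apply: sumr_ge0 => k _; apply: qf_nonneg => //; lia.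
have ha : a < 0 by apply: lt_le_trans ha'.
have aA' : a * A < 0 by nra.
have t1 : al ^+ 2 * (a * A) <= 0 by apply: mulr_ge0_le0; [exact: sqr_ge0|exact: ltW].
have t2 : be ^+ 2 * (a' * B) <= 0.
  by apply: mulr_ge0_le0; [exact: sqr_ge0|]; apply: mulr_le0_ge0.
have al0 : al = 0.
  have : al ^+ 2 * (a * A) = 0 by lra.
  by move/eqP; rewrite mulf_eq0 (lt_eqF aA') orbF expf_eq0 /= => /eqP.
have S0 : \sum_(k < J) ee R L k * y k ^+ 2 = 0.
  by rewrite al0 expr0n mul0r add0r in Fz; apply/eqP; rewrite eq_le Fz0 Fz t2.
have T0 := @psumr_eq0P _ _ xpredT _ (fun k _ => qf_nonneg (J := J) hL0 hy k) S0 (Ordinal hJ0) isT.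
have be0 : be = 0.
  move: T0; rewrite /y /= al0 mul0r add0r u'0 u'1 subr0 mulr1.
  rewrite ee_2; last by apply/eqP => E; rewrite -E in hL.
  by move/eqP; rewrite mulf_eq0 expf_eq0 /= => /orP[/eqP H|/eqP //]; exfalso; lra.
have hw : u L - u L.-1 = 0 by move: be0; rewrite /be; lra.
have : 0 <= Fuu.
  rewrite /Fuu; apply: sumr_ge0 => k _; rewrite -mulrA -expr2.
  apply: (qf_nonneg (y := fun k => u k.+1 - u k)) => //; by rewrite prednK // ltnW.
lra.
Qed.


Lemma roots_info (R : realType) J L : (5 <= J)%N -> (2 <= L)%N -> (L <= J - 1)%N ->
  exists r : nat -> R,
  [/\ forall i j, (i < j)%N -> (j < J.-1)%N -> r i < r j,
      forall i, (i < J.-1)%N -> -1 < r i < 8,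
      r 0%N < 0,
      forall i, (0 < i)%N -> (i < J.-1)%N -> 0 < r i &
      forall i, (i < J.-1)%N -> useq L (r i) J = 0].
Proof.
move=> hJ hL1 hL2.
have [r [rm rb rfac rsg]] := @sturm R L J.-1 hL1 ltac:(lia).
have rm' := mono_gen rm.
have hu : forall i, (i < J.-1)%N -> useq L (r i) J = 0.
  move=> i hi; have [h _] := u_P L (r i) J.-1.
  have hpe : pe R L J.-1 != 0 by apply/prodf_neq0 => k _; apply: ee_neq0.
  move: h; rewrite prednK; last by lia.
  rewrite rfac horner_prod (bigD1 (Ordinal hi)) //= hornerXsubC subrr mul0r mulr0.
  by move/eqP; rewrite mulf_eq0 (negbTE hpe) orbF => /eqP.
have G := GG_EE R J.-1 hL1; case: G => [G _].
have GE : GG R L J.-1 < 0.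
  rewrite G /EE ifF; last by lia.
  have -> : J.-1 = (J.-1 - 3).+3 by lia.
  rewrite /= !natS pmulr_rlt0; last by apply: exprn_gt0; lra.
  have : 0 <= (J.-1 - 3)%:R :> R by apply: ler0n.
  lra.
have hJ1 : (0 < J.-1)%N by lia.
have r00 : r 0%N < 0.
  case: (ltP (r 0%N) 0) => // h.
  exfalso.
  have hP : (PP R L J.-1).[0] = \prod_(j < J.-1) (0 - r j).
    rewrite rfac horner_prod; apply: eq_bigr => j _; exact: hornerXsubC.
  case: (eqVneq (r 0%N) 0) => h0.
    have : (PP R L J.-1).[0] = 0.
      by rewrite hP (bigD1 (Ordinal hJ1)) //= h0 subrr mul0r.
    by move=> E; move: GE; rewrite /GG E mulr0 ltxx.
  have h' : 0 < r 0%N by rewrite lt_neqAle eq_sym h0 h.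
  have S : 0 < (-1) ^+ (J.-1 - 0) * \prod_(j < J.-1) (0 - r j).
    apply: sgn_prod => // j _ hj; case: (posnP j) => [->|hj0] //.
    exact: lt_trans h' (rm' _ _ hj0 hj).
  by move: GE; rewrite /GG hP subn0 in S *; lra.
have r1 : forall i, (0 < i)%N -> (i < J.-1)%N -> 0 < r i.
  move=> i hi0 hi; case: (ltP 0 (r 1%N)) => h1.
    case: (posnP i.-1) => hh; first by have -> : i = 1%N by lia.
    by apply: lt_trans h1 (rm' _ _ _ hi); lia.
  exfalso; apply: (@qf_contra R J L (r 0%N) (r 1%N)) => //; try lia.
  - by apply: hu; lia.
  - by apply: hu; lia.
  - by apply: rm'; lia.
by exists r; split.
Qed.


Unset Implicit Arguments.

(* mu k (0 <= k < J) stands for the paper's mu_{k-1}. *)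
Theorem proposition3p1 (R : realType) (J L : nat)
  (hJ : (5 <= J)%N) (hL1 : (2 <= L)%N) (hL2 : (L <= J - 1)%N) :
  diagonalizable (matB R J L) /\
  (exists mu : nat -> R,
      (forall i j : nat, (i < j)%N -> (j < J)%N -> mu i < mu j) /\
      (forall a : R, eigenvalue (matB R J L) a <-> exists2 k : nat, (k < J)%N & a = mu k) /\
      -1 < mu 0%N /\ mu 0%N < 0 /\ mu 1%N = 0 /\ mu J.-1 < 8) /\
  (exists! a : R, eigenvalue (matB R J L) a /\ a < 0).
Proof.
have [r [rm rb r0 rpos hu]] := @roots_info R J L hJ hL1 hL2.
have hJ1 : (1 < J)%N by lia.
pose mu k := if k == 0%N then r 0%N else if k == 1%N then 0 else r k.-1.
have mum : forall i j, (i < j)%N -> (j < J)%N -> mu i < mu j.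
  move=> i j hij hj; rewrite /mu.
  case: (eqVneq i 0%N) => [i0|/eqP i0]; case: (eqVneq j 0%N) => [j0|/eqP j0]; try (exfalso; lia).
  - case: (eqVneq j 1%N) => [//|/eqP j1]; apply: rm; lia.
  - case: (eqVneq i 1%N) => [i1|/eqP i1]; case: (eqVneq j 1%N) => [j1|/eqP j1]; try (exfalso; lia).
    + by apply: rpos; lia.
    + by apply: rm; lia.
have mueig : forall k, (k < J)%N -> eigenvalue (matB R J L) (mu k).
  move=> k hk; rewrite /mu.
  case: (eqVneq k 0%N) => [_|/eqP k0].
    by apply: eig_u => //; [rewrite lt_eqF | apply: hu; lia].
  case: (eqVneq k 1%N) => [_|/eqP k1]; first exact: eig0.
  apply: eig_u => //; last by apply: hu; lia.
  by rewrite gt_eqF //; apply: rpos; lia.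
have cpf : char_poly (matB R J L) = \prod_(k < J) ('X - (mu k)%:P).
  apply: factor_lemma.
  - exact: char_poly_monic.
  - exact: size_char_poly.
  - by move=> i hi; apply: mum.
  - by move=> i hi; rewrite -eigenvalue_root_char; apply: mueig.
have eigP : forall a, eigenvalue (matB R J L) a <-> exists2 k : nat, (k < J)%N & a = mu k.
  move=> a; split; last by move=> [k hk ->]; apply: mueig.
  rewrite eigenvalue_root_char cpf /root horner_prod => /prodf_eq0 [k _].
  by rewrite hornerXsubC subr_eq0 => /eqP ->; exists k.
split.
  case: J hJ hL2 r rm rb r0 rpos hu hJ1 mu mum mueig cpf eigP => [|J'] //.
  move=> hJ hL2 r rm rb r0 rpos hu hJ1 mu mum mueig cpf eigP.
  apply/diagonalizableP; exists (mkseq mu J'.+1).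
    apply/mkseq_uniqP => i j; rewrite !inE => hi hj hij.
    case: (ltngtP i j) => // h; exfalso.
      by have := mum _ _ h hj; rewrite hij ltxx.
    by have := mum _ _ h hi; rewrite hij ltxx.
  apply: dvdp_trans (mxminpoly_dvd_char _) _.
  rewrite cpf /mkseq big_map.
  have -> : iota 0 J'.+1 = index_iota 0 J'.+1 by rewrite /index_iota subn0.
  by rewrite big_mkord.
split.
  exists mu; split => //; split => //.
  rewrite /mu /=; split; first by have := rb 0%N ltac:(lia); case/andP.
  split => //; split => //.
  have -> : (J.-1 == 0%N) = false by apply/eqP; lia.
  have -> : (J.-1 == 1%N) = false by apply/eqP; lia.
  by have := rb J.-2 ltac:(lia); case/andP.
exists (r 0%N); split.
  by split => //; have := mueig 0%N ltac:(lia).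
move=> a [/eigP [k hk ->] hneg].
move: hneg; rewrite /mu.
case: (eqVneq k 0%N) => [//|/eqP k0].
case: (eqVneq k 1%N) => [_|/eqP k1]; first by rewrite ltxx.
by have := rpos k.-1 ltac:(lia) ltac:(lia); lra.
Qed.
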